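(* For every $\epsilon>0$ there is a constant $c$ such that every parenthesis matching $M$ on $n$ vertices satisfies $$r_<(M,K_3)\le c\,n^{1+\epsilon}.$$
   Context: An ordered graph on $[N]$ is a graph with vertex set $\{1,\dots,N\}$ equipped with the natural order. Given a red/blue coloring of the edges of the complete graph on $[N]$, a red (ordered) copy of an ordered graph $G$ on $[p]$ is a strictly increasing map $\varphi:[p]\to[N]$ such that $\varphi(u)\varphi(v)$ is red for every edge $uv$ of $G$. The ordered Ramsey number $r_<(G,K_3)$ is the smallest $N$ such that every red/blue coloring of the edges of the complete graph on $[N]$ contains either a red ordered copy of $G$ or a blue triangle. A parenthesis matching is an ordered perfect matching on $[n]$ in which no two edges cross: for any two edges $\{i,j\}$, $\{k,l\}$ with $i<j$, $k<l$, the intervals $[i,j]$ and $[k,l]$ are either disjoint or one is contained in the other (equivalently, it is the matching induced by a balanced parenthesis sequence, matched parentheses forming the edges). *)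

(* Defs.v *)
From mathcomp Require Import all_boot.
From Stdlib Require Import Reals.

Set Implicit Arguments.
Unset Strict Implicit.
Unset Printing Implicit Defensive.

(* A red/blue colouring of the edges of the complete graph on [N]:
   the edge {i,j} with i < j is red iff c i j = true (values of c on pairs
   with i >= j are irrelevant). *)
Definition coloring (N : nat) := 'I_N -> 'I_N -> bool.

(* An ordered graph on [p] is given by a relation g; the edge {u,v}, u < v,
   is present iff g u v. *)
Definition red_copy (p : nat) (g : rel 'I_p) (N : nat) (c : coloring N) : Prop :=
  exists phi : 'I_p -> 'I_N,
    (forall u v : 'I_p, u < v -> phi u < phi v) /\
    (forall u v : 'I_p, u < v -> g u v -> c (phi u) (phi v)).

Definition blue_triangle (N : nat) (c : coloring N) : Prop :=
  exists i j k : 'I_N,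
    [/\ i < j, j < k, ~~ c i j, ~~ c i k & ~~ c j k].

Definition arrows_K3 (p : nat) (g : rel 'I_p) (N : nat) : Prop :=
  forall c : coloring N, red_copy g c \/ blue_triangle c.

Definition is_parenthesis_matching (n : nat) (m : rel 'I_n) : Prop :=
  [/\ symmetric m, irreflexive m,
      (forall i : 'I_n, exists! j : 'I_n, m i j) &
      (forall i j k l : 'I_n, i < j -> k < l -> m i j -> m k l ->
         (j < k \/ l < i) \/ (k <= i /\ j <= l) \/ (i <= k /\ l <= j))].

(* Main.v *)
Require Import Defs.
From mathcomp Require Import all_boot.
From Stdlib Require Import Reals.
From Stdlib Require Import Lra Lia ZArith Classical.
From mathcomp Require Import zify.
From mathcomp Require Import all_boot.

Set Implicit Arguments.
Unset Strict Implicit.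
Unset Printing Implicit Defensive.

Section Comb.
Variable n : nat.
Variable f : nat -> nat.
Hypothesis f_lt : forall i, i < n -> f i < n.
Hypothesis f_inv : forall i, i < n -> f (f i) = i.
Hypothesis f_neq : forall i, i < n -> f i != i.
Hypothesis f_nc : forall i j, i < n -> i < f i -> i < j -> j < f i -> (i < f j) && (f j < f i).

Variable NN : nat.
Variable col : nat -> nat -> bool.
Hypothesis notri : forall x y z, x < y -> y < z -> z < NN -> [|| col x y, col x z | col y z].

Variable d : nat.
Variable h : nat -> nat.
Hypothesis d2 : 2 <= d.
Hypothesis h_mono : forall x y, x <= y -> h x <= h y.
Hypothesis h_core : forall s m, 1 <= m -> m <= s -> d * m <= (d-1) * s -> h m + 8 <= h s.
Hypothesis h_light : forall s, d <= s -> 4 * h (s %/ d) + 12 <= h s.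
Hypothesis h_10 : forall s, 1 <= s -> 10 <= h s.

Definition Phi s := s * h s.

Definition closed p q := forall i, p <= i < q -> p <= f i < q.
Definition emb p q lo hi (phi : nat -> nat) :=
  [/\ forall i j, p <= i -> i < j -> j < q -> phi i < phi j,
      forall i, p <= i < q -> lo <= phi i < hi &
      forall i, p <= i < q -> i < f i -> col (phi i) (phi (f i))].

Lemma emb_widen p q lo hi lo' hi' phi : emb p q lo hi phi -> lo' <= lo -> hi <= hi' -> emb p q lo' hi' phi.
Proof.
case=> h1 h2 h3 l1 l2; split => // i hi0; have := h2 i hi0; lia.
Qed.

Lemma emb_empty p q lo hi phi : q <= p -> emb p q lo hi phi.
Proof. move=> qp; split => *; lia. Qed.

Lemma closed_cat p r q : closed p r -> closed r q -> p <= r -> r <= q -> closed p q.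
Proof.
move=> c1 c2 pr rq i hi0; case: (ltnP i r) => ir.
  have := c1 i; lia.
have := c2 i; lia.
Qed.

Lemma emb_glue p r q lo1 hi1 lo2 hi2 phi1 phi2 :
  closed p r -> closed r q -> p <= r -> r <= q ->
  emb p r lo1 hi1 phi1 -> emb r q lo2 hi2 phi2 -> hi1 <= lo2 -> lo1 <= lo2 -> hi1 <= hi2 ->
  emb p q lo1 hi2 (fun i => if i < r then phi1 i else phi2 i).
Proof.
move=> c1 c2 pr rq [a1 a2 a3] [b1 b2 b3] h12 l12 hh; split.
- move=> i j pi ij jq; case: (ltnP i r) => ir; case: (ltnP j r) => jr.
  + exact: a1.
  + have := a2 i; have := b2 j; lia.
  + lia.
  + exact: b1.
- move=> i hi0; case: (ltnP i r) => ir.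
  + have := a2 i; lia.
  + have := b2 i; lia.
- move=> i hi0 ifi; case: (ltnP i r) => ir.
  + move: (c1 i (ltac:(lia))) => /andP [k1 k2].
    rewrite k2; apply: a3 => //; lia.
  + move: (c2 i (ltac:(lia))) => /andP [k1 k2].
    rewrite ltnNge k1 /=; apply: b3 => //; lia.
Qed.

Lemma content_closed p : p < n -> p < f p -> closed p.+1 (f p).
Proof.
move=> pn pf i /andP [h1 h2]; have := f_nc pn pf (j:=i) h1 h2; lia.
Qed.

Lemma block_closed p : p < n -> p < f p -> closed p (f p).+1.
Proof.
move=> pn pf i /andP [h1 h2].
case: (eqVneq i p) => [->|ip]; first lia.
case: (eqVneq i (f p)) => [->|ie]; first by rewrite f_inv //; lia.
have := f_nc pn pf (j:=i) (ltac:(lia)) (ltac:(lia)); lia.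
Qed.

Lemma first_block p q : closed p q -> p < q -> q <= n -> p < f p < q.
Proof.
move=> cl pq qn; have := cl p; rewrite leqnn pq => /(_ isT) /andP [h1 h2].
have := f_neq (i:=p) (ltac:(lia)); lia.
Qed.

Lemma rest_closed p q : closed p q -> p < q -> q <= n -> closed (f p).+1 q.
Proof.
move=> cl pq qn; have /andP [h1 h2] := first_block cl pq qn.
move=> i /andP [i1 i2]; move: (cl i (ltac:(lia))) => /andP [j1 j2].
rewrite j2 andbT ltnNge; apply/negP => le.
move: (block_closed (p:=p) (ltac:(lia)) h1 (i := f i) (ltac:(lia))).
rewrite f_inv; lia.
Qed.

Lemma emb_wrap p lo' hi' a b phi :
  p < n -> p < f p -> emb p.+1 (f p) lo' hi' phi -> a < lo' -> hi' <= b -> a < b -> col a b ->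
  emb p (f p).+1 a b.+1 (fun i => if i == p then a else if i == f p then b else phi i).
Proof.
move=> pn pf [a1 a2 a3] al hb ab cab; have cc := content_closed pn pf; split.
- move=> i j pi ij jq.
  have [ip|ip] := eqVneq i p; have [jp|jp] := eqVneq j p;
  have [ie|ie] := eqVneq i (f p); have [je|je] := eqVneq j (f p);
  try (have := a2 i (ltac:(lia))); try (have := a2 j (ltac:(lia))); try lia.
  move=> _ _; apply: a1; lia.
- move=> i /andP [h1 h2].
  have [ip|ip] := eqVneq i p; first lia.
  have [ie|ie] := eqVneq i (f p); first lia.
  have := a2 i; lia.
- move=> i /andP [h1 h2] ifi.
  have [ip|ip] := eqVneq i p.
    subst i; by rewrite ?eqxx (negbTE (f_neq pn)) ?eqxx.
  have [ie|ie] := eqVneq i (f p).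
    subst i; move: ifi; rewrite f_inv //; lia.
  move: (cc i (ltac:(lia))) => /andP [k1 k2].
  rewrite (ltac:(lia) : (f i == p) = false) (ltac:(lia) : (f i == f p) = false).
  apply: a3 => //; lia.
Qed.


Definition blueE v w := ~~ col (minn v w) (maxn v w).
Definition deg lo hi v := count (fun w => (w != v) && blueE v w) (index_iota lo hi).

Lemma red_of_blue2 v w1 w2 : w1 < w2 -> w2 < NN -> v < NN -> v != w1 -> v != w2 ->
  blueE v w1 -> blueE v w2 -> col w1 w2.
Proof.
move=> w12 w2N vN vw1 vw2.
have B1 x y : x < y -> blueE x y = ~~ col x y.
  move=> xy; rewrite /blueE; have -> : minn x y = x by lia.
  by have -> : maxn x y = y by lia.
have B2 x y : y < x -> blueE x y = ~~ col y x.
  move=> xy; rewrite /blueE; have -> : minn x y = y by lia.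
  by have -> : maxn x y = x by lia.
case: (ltnP v w1) => a.
- rewrite B1 // B1; last lia.
  move=> /negbTE b1 /negbTE b2; have := notri a w12 w2N; by rewrite b1 b2.
- have a' : w1 < v by rewrite ltn_neqAle a eq_sym vw1.
  rewrite B2 //; case: (ltnP v w2) => b.
  + rewrite B1 //.
    move=> /negbTE b1 /negbTE b2; have := notri a' b w2N; by rewrite b1 b2 orbF.
  + have b' : w2 < v by rewrite ltn_neqAle b eq_sym vw2.
    rewrite B2 //.
    move=> /negbTE b1 /negbTE b2; have := notri w12 b' vN; by rewrite b1 b2 !orbF.
Qed.

Lemma clique_emb p q lo hi v : closed p q -> q <= n -> hi <= NN -> lo <= v < hi ->
  q - p <= deg lo hi v -> exists phi, emb p q lo hi phi.
Proof.
move=> cl qn hN vr hdeg.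
set Ls := [seq w <- index_iota lo hi | (w != v) && blueE v w].
have sz : size Ls = deg lo hi v by rewrite size_filter.
have srt : sorted ltn Ls by apply: sorted_filter; [exact: ltn_trans | exact: iota_ltn_sorted].
have memL k : k < size Ls -> [/\ lo <= nth 0 Ls k < hi, nth 0 Ls k != v & blueE v (nth 0 Ls k)].
  move=> hk; have := mem_nth 0 hk; rewrite mem_filter mem_index_iota => /andP [/andP [a b] c].
  by split => //; rewrite eq_sym.
have mono i j : i < j -> j < size Ls -> nth 0 Ls i < nth 0 Ls j.
  move=> ij js; apply: (sorted_ltn_nth ltn_trans 0 srt); rewrite ?inE /=; [exact: ltn_trans ij js| exact: js | exact: ij].
exists (fun i => nth 0 Ls (i - p)); split.
- move=> i j pi ij jq; apply: mono; lia.
- move=> i hi0; have [] := memL (i - p) (ltac:(lia)); lia.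
- move=> i hi0 ifi; have /andP [k1 k2] := cl i hi0.
  have [r1 r2 r3] := memL (i - p) (ltac:(lia)).
  have [s1 s2 s3] := memL (f i - p) (ltac:(lia)).
  apply: (red_of_blue2 (v:=v)) => //.
  + apply: mono; lia.
  + lia.
  + lia.
  + by rewrite eq_sym.
  + by rewrite eq_sym.
Qed.


Definition core_ok a b := forall i, a <= i < b -> i < f i -> d * (f i + 1 - i) <= (d - 1) * (b - a).

Inductive chain : nat -> nat -> nat -> nat -> nat -> Prop :=
| ChCore p : p < n -> p < f p -> core_ok p.+1 (f p) -> chain p (f p) p.+1 (f p) 1
| ChStep p x cp cq G : p < n -> p < f p -> p < x -> x < f x -> f x < f p ->
    closed p.+1 x -> closed (f x).+1 (f p) ->
    d * ((x - p.+1) + (f p - (f x).+1)) < f p - p.+1 ->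
    chain x (f x) cp cq G ->
    chain p (f p) cp cq (G + maxn (Phi (x - p.+1)) (Phi (f p - (f x).+1)) + 1).

Lemma chain_exists k : forall p, f p - p = k -> p < n -> p < f p ->
  exists cp cq G, chain p (f p) cp cq G.
Proof.
elim/ltn_ind: k => k IH p hk pn pf.
have fpn : f p < n by apply: f_lt.
pose P i := [&& p < i < f p, i < f i & (d - 1) * (f p - p.+1) < d * (f i + 1 - i)].
case: (boolP (has P (index_iota p.+1 (f p)))) => hP; last first.
  exists p.+1, (f p), 1; apply: ChCore => // i /andP [i1 i2] ifi.
  rewrite leqNgt; apply/negP => bad; move/hasPn: hP => /(_ i).
  rewrite mem_index_iota i1 i2 => /(_ isT); rewrite /P ifi bad; lia.
have exP : exists i, P i by move/hasP: hP => [i _ Pi]; exists i.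
case: (ex_minnP exP) => x Px xmin.
move: (Px) => /and3P [/andP [x1 x2] x3 x4].
have cc := content_closed pn pf.
have xn : x < n by lia.
have fxn : f x < n by apply: f_lt.
have bx := block_closed xn x3.
have fxp : f x < f p by move: (cc x (ltac:(lia))) => /andP [_ ?].
have cL : closed p.+1 x.
  move=> i /andP [i1 i2]; move: (cc i (ltac:(lia))) => /andP [j1 j2].
  rewrite j1 /= ltnNge; apply/negP => le.
  have ifi : i < f i by lia.
  have [fi|fi] := eqVneq (f i) x.
    have := f_inv (i:=i) (ltac:(lia)); rewrite fi => e; lia.
  have := f_nc (i:=i) (j:=x) (ltac:(lia)) ifi (ltac:(lia)) (ltac:(lia)) => /andP [k1 k2].
  have Pi : P i.
    rewrite /P (ltac:(lia) : p < i < f p) ifi /=.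
    apply: (leq_trans x4); rewrite leq_mul2l; apply/orP; right; lia.
  have := xmin i Pi; lia.
have cR : closed (f x).+1 (f p).
  move=> i /andP [i1 i2]; move: (cc i (ltac:(lia))) => /andP [j1 j2].
  rewrite j2 andbT ltnNge; apply/negP => le.
  case: (ltnP (f i) x) => h1.
    move: (cL (f i) (ltac:(lia))); rewrite f_inv; lia.
  move: (bx (f i) (ltac:(lia))); rewrite f_inv; lia.
have hl : d * ((x - p.+1) + (f p - (f x).+1)) < f p - p.+1.
  set K := f p - p.+1; set sp := f x + 1 - x.
  have E : (x - p.+1) + (f p - (f x).+1) = K - sp by rewrite /K /sp; lia.
  have spK : sp <= K by rewrite /K /sp; lia.
  rewrite E mulnBr.
  have : d * sp <= d * K by rewrite leq_mul2l spK orbT.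
  move: x4; rewrite -/K -/sp mulnBl mul1n.
  have : K <= d * K by rewrite leq_pmull //; lia.
  lia.
have [cp [cq [G ch]]] := IH (f x - x) (ltac:(lia)) x erefl xn x3.
exists cp, cq, (G + maxn (Phi (x - p.+1)) (Phi (f p - (f x).+1)) + 1).
by apply: ChStep.
Qed.

Lemma chain_core p e cp cq G : chain p e cp cq G ->
  [/\ p < n, f p = e, p < cp, cp <= cq & cq <= e] /\ (closed cp cq /\ core_ok cp cq).
Proof.
elim=> {p e cp cq G} [p pn pf cok|p x cp cq G pn pf px xfx fxp cL cR hl ch IH].
  split; split => //; exact: content_closed.
case: IH => [[xn _ a1 a2 a3] a4]; split => //; split => //; lia.
Qed.

Lemma chain_G S p e cp cq G : chain p e cp cq G -> e < p + S ->
  exists k lam, [/\ 1 <= k, e.+1 - p = (cq - cp) + lam + 2 * k,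
                    G <= lam * h (S %/ d) + k & (lam = 0 \/ d <= S)].
Proof.
elim=> {p e cp cq G} [p pn pf cok|p x cp cq G pn pf px xfx fxp cL cR hl ch IH] hS.
  exists 1, 0; split => //; try lia; by left.
have [k [lam [k1 e1 e2 e3]]] := IH (ltac:(lia)).
have [[cc1 _ cc2 cc3 cc4] _] := chain_core ch.
set a := x - p.+1; set b := f p - (f x).+1.
have hab : d * (a + b) < S by lia.
have ha : a <= S %/ d.
  rewrite leq_divRL; last lia.
  apply: leq_trans (ltnW hab); rewrite mulnC leq_mul2l leq_addr orbT //.
have hb : b <= S %/ d.
  rewrite leq_divRL; last lia.
  apply: leq_trans (ltnW hab); rewrite mulnC leq_mul2l leq_addl orbT //.
have Pa : Phi a <= a * h (S %/ d) by rewrite /Phi leq_mul2l h_mono // orbT.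
have Pb : Phi b <= b * h (S %/ d) by rewrite /Phi leq_mul2l h_mono // orbT.
exists k.+1, (lam + a + b); split => //.
- rewrite /a /b; lia.
- rewrite !mulnDl.
  have : maxn (Phi a) (Phi b) <= Phi a + Phi b by rewrite geq_max leq_addr leq_addl.
  lia.
- case: (posnP (a + b)) => ab.
    case: e3 => e3; [left; lia | by right].
  right; apply: leq_trans (ltnW hab); rewrite -[X in X <= _]muln1 leq_mul2l; lia.
Qed.


Definition Good s := forall p q lo hi, q <= n -> p + s = q -> closed p q -> hi <= NN ->
  lo + Phi s <= hi -> exists phi, emb p q lo hi phi.

Lemma core_emb S m : (forall s', s' < S -> Good s') -> m < S ->
  forall k a b lo' hi', b - a = k -> a <= b -> b <= n -> closed a b ->
  (forall i, a <= i < b -> i < f i -> f i + 1 - i <= m) -> hi' <= NN ->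
  lo' + k * h m <= hi' -> exists phi, emb a b lo' hi' phi.
Proof.
move=> IH mS k; elim/ltn_ind: k => k IHk a b lo' hi' hk ab bn cl sp hN hr.
case: (posnP k) => k0.
  by exists id; apply: emb_empty; lia.
have [h1 h2] : a < f a /\ f a < b by have := first_block cl (ltac:(lia)) bn; lia.
have spa : f a + 1 - a <= m by apply: sp => //; lia.
have Pa : Phi (f a + 1 - a) <= (f a + 1 - a) * h m by rewrite /Phi leq_mul2l h_mono // orbT.
have Pk : (f a + 1 - a) * h m <= k * h m by rewrite leq_mul2r; apply/orP; right; lia.
have [phi1 e1] : exists phi, emb a (f a).+1 lo' (lo' + Phi (f a + 1 - a)) phi.
  apply: (IH (f a + 1 - a)); try lia.
  apply: block_closed; lia.
have [phi2 e2] : exists phi, emb (f a).+1 b (lo' + (f a + 1 - a) * h m) hi' phi.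
  apply: (IHk (b - (f a).+1)); try lia.
  - apply: (rest_closed cl) => //; lia.
  - move=> i hi0 ifi; apply: sp => //; lia.
exists (fun i => if i < (f a).+1 then phi1 i else phi2 i).
apply: (emb_glue (block_closed (p:=a) (ltac:(lia)) h1) (rest_closed cl (ltac:(lia)) bn) _ _ e1 e2); lia.
Qed.

Lemma count_sum (T : Type) (P : pred T) s : count P s = \sum_(i <- s) P i.
Proof. by elim: s => [|x s IH]; rewrite ?big_nil ?big_cons //= IH. Qed.

Lemma iota_cons a b : a < b -> index_iota a b = a :: index_iota a.+1 b.
Proof.
move=> ab; rewrite /index_iota (_ : b - a = (b - a.+1).+1) //; lia.
Qed.

Lemma cnt_split (P : pred nat) a m b : a <= m -> m <= b ->
  count P (index_iota a b) = count P (index_iota a m) + count P (index_iota m b).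
Proof.
move=> am mb; rewrite /index_iota -count_cat.
rewrite (_ : iota m (b - m) = iota (a + (m - a)) (b - m)); last by congr iota; lia.
rewrite -iotaD; congr (count _ (iota _ _)); lia.
Qed.

Lemma first_true (r : nat -> bool) k : forall a b, b - a = k ->
  count (fun y => ~~ r y) (index_iota a b) < b - a ->
  exists y, [/\ a <= y < b, r y &
    count (fun y => ~~ r y) (index_iota a b) = (y - a) + count (fun y => ~~ r y) (index_iota y.+1 b)].
Proof.
elim: k => [|k IH] a b hk hc; first lia.
rewrite iota_cons in hc *; last lia.
case: (boolP (r a)) => ra.
  exists a; split => //; first lia.
  by rewrite /= ra subnn.
move: hc; rewrite /= ra /= => hc.
have [y [y1 y2 y3]] := IH a.+1 b (ltac:(lia)) (ltac:(lia)).
exists y; split => //; first lia.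
rewrite y3; lia.
Qed.

Lemma sum_shift_le (F : nat -> nat) a D lo hi : lo <= a -> a + D <= hi ->
  \sum_(0 <= c < D) F (a + c) <= \sum_(lo <= w < hi) F w.
Proof.
move=> la ah.
have -> : \sum_(0 <= c < D) F (a + c) = \sum_(a <= w < a + D) F w.
  have := @big_addn nat 0 addn 0 (a + D) a xpredT F; rewrite add0n => ->.
  rewrite (_ : a + D - a = D); last lia.
  by apply: eq_bigr => i _; rewrite addnC.
rewrite (@big_cat_nat _ _ _ a lo hi _ _ la (ltac:(lia) : a <= hi)) /=.
rewrite (@big_cat_nat _ _ _ (a + D) a hi _ _ (ltac:(lia) : a <= a + D) ah) /=.
lia.
Qed.


Lemma sum_lower (g : nat -> nat) K D : (forall c, c < D -> K <= g c) -> D * K <= \sum_(0 <= c < D) g c.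
Proof.
elim: D => [|D IH] H; first by rewrite big_geq.
have A : D * K <= \sum_(0 <= c < D) g c by apply: IH => c cD; apply: H; lia.
have B : K <= g D by apply: H.
rewrite big_nat_recr //= mulSn; lia.
Qed.

Lemma sum_upper (g : nat -> nat) K Y : (forall y, y < Y -> g y <= K) -> \sum_(0 <= y < Y) g y <= Y * K.
Proof.
elim: Y => [|Y IH] H; first by rewrite big_geq.
have A : \sum_(0 <= c < Y) g c <= Y * K by apply: IH => c cD; apply: H; lia.
have B : g Y <= K by apply: H.
rewrite big_nat_recr //= mulSn; lia.
Qed.

Lemma count_choice lo hi s X Fc Y D top G :
  top = lo + X + X + Fc -> Y + D = X -> D = 2 * s -> 0 < s -> top <= hi ->
  (forall v, lo <= v < hi -> deg lo hi v < s) -> Y = 2 * G + 2 * s ->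
  exists c, c < D /\ count (fun y => ~~ col (lo + y + c) (top - 1 - y)) (index_iota 0 Y) <= G + 2 * s.
Proof.
move=> ht hY hD s0 thi hdeg hYG.
pose cnt c := count (fun y => ~~ col (lo + y + c) (top - 1 - y)) (index_iota 0 Y).
case: (boolP (has (fun c => cnt c <= G + 2 * s) (index_iota 0 D))) => H.
  move/hasP: H => [c]; rewrite mem_index_iota => /andP [_ cD] hc; by exists c.
exfalso.
have low : D * (G + 2 * s).+1 <= \sum_(0 <= c < D) cnt c.
  apply: sum_lower => c cD; move/hasPn: H => /(_ c); rewrite mem_index_iota cD /= => /(_ isT).
  by rewrite ltnNge.
have up : \sum_(0 <= c < D) cnt c <= Y * (s - 1).
  rewrite /cnt; under eq_bigr do rewrite count_sum.
  rewrite exchange_big /=; apply: sum_upper => y yY.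
  pose F w := ((w != top - 1 - y) && blueE (top - 1 - y) w : nat).
  rewrite (@eq_big_nat _ _ _ 0 D _ (fun c => F (lo + y + c))); last first.
    move=> c /andP [_ cD]; rewrite /F.
    rewrite (_ : (lo + y + c != top - 1 - y) = true); last by apply/eqP; lia.
    rewrite /blueE (_ : minn (top - 1 - y) (lo + y + c) = lo + y + c); last lia.
    by rewrite (_ : maxn (top - 1 - y) (lo + y + c) = top - 1 - y); last lia.
  apply: leq_trans (sum_shift_le F (a := lo + y) (D := D) (lo := lo) (hi := hi) _ _) _; try lia.
  have D1 := hdeg (top - 1 - y) (ltac:(lia)).
  have D2 : \sum_(lo <= w < hi) F w <= deg lo hi (top - 1 - y).
    by rewrite /deg count_sum; apply: leq_sum => w _; rewrite /F.
  lia.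
have : D * (G + 2 * s).+1 <= Y * (s - 1) by apply: leq_trans up.
rewrite hD hYG; nia.
Qed.


Lemma chain_embed S lo X Fc c Y top :
  (forall s', s' < S -> Good s') ->
  top = lo + X + X + Fc -> Y + c <= X -> top <= NN ->
  forall p e cp cq G, chain p e cp cq G ->
  forall psi, emb cp cq (lo + X) (lo + X + Fc) psi -> e < p + S ->
  forall y0, y0 + count (fun y => ~~ col (lo + y + c) (top - 1 - y)) (index_iota y0 Y) + G <= Y ->
  exists phi, emb p e.+1 (lo + y0 + c) (top - y0) phi.
Proof.
move=> IH ht hYX htN p e cp cq G ch.
elim: ch => {p e cp cq G} [p pn pf cok | p x cp cq G pn pf px xfx fxp cL cR hl ch IHc] psi hpsi hS y0 hy0.
- have := @first_true (fun y => col (lo + y + c) (top - 1 - y)) (Y - y0) y0 Y erefl.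
  rewrite /= => /(_ (ltac:(lia))) [y [/andP [y1 y2] ry _]].
  have e3 := emb_wrap (a := lo + y + c) (b := top - 1 - y) pn pf hpsi (ltac:(lia)) (ltac:(lia)) (ltac:(lia)) ry.
  eexists; apply: emb_widen e3 _ _; lia.
- have [g hg] : exists g, g = maxn (Phi (x - p.+1)) (Phi (f p - (f x).+1)) + 1 by eexists.
  have fpn := f_lt pn.
  have := @first_true (fun y => col (lo + y + c) (top - 1 - y)) (Y - y0) y0 Y erefl.
  rewrite /= => /(_ (ltac:(lia))) [y [/andP [y1 y2] ry hcnt]].
  have hsp := cnt_split (fun y => ~~ col (lo + y + c) (top - 1 - y)) (a := y.+1) (m := y + g) (b := Y) (ltac:(lia)) (ltac:(lia)).
  have xn : x < n by lia.
  have fxn : f x < n by apply: f_lt.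
  have [phiH eH] := IHc psi hpsi (ltac:(lia)) (y + g) (ltac:(lia)).
  have [phiL eL] : exists phi, emb p.+1 x (lo + y + c + 1) (lo + y + c + g) phi.
    apply: (IH (x - p.+1)); try lia.
    exact: cL.
  have [phiR eR] : exists phi, emb (f x).+1 (f p) (top - y - g) (top - y - 1) phi.
    apply: (IH (f p - (f x).+1)); try lia.
    exact: cR.
  have bx := block_closed xn xfx.
  have e1 := emb_glue cL bx (ltac:(lia)) (ltac:(lia)) eL eH (ltac:(lia)) (ltac:(lia)) (ltac:(lia)).
  have cLH := closed_cat cL bx (ltac:(lia)) (ltac:(lia)).
  have e2 := emb_glue cLH cR (ltac:(lia)) (ltac:(lia)) e1 eR (ltac:(lia)) (ltac:(lia)) (ltac:(lia)).
  have e3 := emb_wrap (a := lo + y + c) (b := top - 1 - y) pn pf e2 (ltac:(lia)) (ltac:(lia)) (ltac:(lia)) ry.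
  eexists; apply: emb_widen e3 _ _; lia.
Qed.


Theorem main_good s : Good s.
Proof.
elim/ltn_ind: s => s IH p q lo hi qn pq cl hN hreg.
case: (posnP s) => s0.
  by exists id; apply: emb_empty; lia.
case: (boolP (has (fun v => s <= deg lo hi v) (index_iota lo hi))) => hd.
  move/hasP: hd => [v]; rewrite mem_index_iota => vr hv.
  apply: (clique_emb (v:=v)) => //; lia.
have hdeg : forall v, lo <= v < hi -> deg lo hi v < s.
  move=> v vr; move/hasPn: hd => /(_ v); rewrite mem_index_iota vr ltnNge.
  by move=> /(_ isT).
have [h1 h2] : p < f p /\ f p < q by have := first_block cl (ltac:(lia)) qn; lia.
have pn : p < n by lia.
case: (ltnP (f p).+1 q) => hq.
  have P12 : Phi ((f p).+1 - p) + Phi (q - (f p).+1) <= Phi s.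
    rewrite /Phi.
    have a1 : ((f p).+1 - p) * h ((f p).+1 - p) <= ((f p).+1 - p) * h s.
      by rewrite leq_mul2l h_mono ?orbT //; lia.
    have a2 : (q - (f p).+1) * h (q - (f p).+1) <= (q - (f p).+1) * h s.
      by rewrite leq_mul2l h_mono ?orbT //; lia.
    have -> : s = ((f p).+1 - p) + (q - (f p).+1) by lia.
    rewrite mulnDl; apply: leq_add.
      apply: leq_trans a1 _; rewrite leq_mul2l h_mono ?orbT //; lia.
    apply: leq_trans a2 _; rewrite leq_mul2l h_mono ?orbT //; lia.
  have [phi1 e1] := IH ((f p).+1 - p) (ltac:(lia)) p (f p).+1 lo (lo + Phi ((f p).+1 - p))
     (ltac:(lia)) (ltac:(lia)) (block_closed pn h1) (ltac:(lia)) (ltac:(lia)).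
  have [phi2 e2] := IH (q - (f p).+1) (ltac:(lia)) (f p).+1 q (lo + Phi ((f p).+1 - p)) hi
     qn (ltac:(lia)) (rest_closed cl (ltac:(lia)) qn) hN (ltac:(lia)).
  eexists; apply: (emb_glue (block_closed pn h1) (rest_closed cl (ltac:(lia)) qn) _ _ e1 e2); lia.
have qe : q = (f p).+1 by lia.
have [cp [cq [G ch]]] := chain_exists erefl pn h1.
have [[_ _ c1 c2 c3] [ccl cok]] := chain_core ch.
have [k [lam [k1 E1 E2 E3]]] := chain_G (S:=s) ch (ltac:(lia)).
have [m hm] : exists m, m = ((d - 1) * (cq - cp)) %/ d by eexists.
have [X hX] : exists X, X = 2 * G + 4 * s by eexists.
have [Y hY] : exists Y, Y = 2 * G + 2 * s by eexists.
have [Fc hFc] : exists Fc, Fc = (cq - cp) * h m by eexists.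
have [top htop] : exists top, top = lo + X + X + Fc by eexists.
have md : m * d <= (d - 1) * (cq - cp) by rewrite hm leq_divM.
have mk : cq - cp = 0 \/ (2 <= cq - cp /\ 1 <= m <= cq - cp).
  case: (posnP (cq - cp)) => kp; first by left.
  right.
  have [j1 j2] : cp < f cp /\ f cp < cq by have := first_block ccl (ltac:(lia)) (ltac:(lia)); lia.
  have k2 : 2 <= cq - cp by lia.
  have m1 : 1 <= m.
    rewrite hm leq_divRL; last lia.
    have : (d - 1) * 2 <= (d - 1) * (cq - cp) by rewrite leq_mul2l k2 orbT.
    lia.
  have kd : cq - cp <= d * (cq - cp) by rewrite leq_pmull //; lia.
  have : m * d < (cq - cp) * d.
    apply: (leq_ltn_trans md); rewrite mulnBl mul1n (mulnC (cq - cp) d); lia.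
  rewrite ltn_pmul2r; last lia.
  move=> mlt; split => //; lia.
have mS : m < s.
  case: mk => [k0|[_ /andP [_ mk]]]; last by lia.
  by move: hm; rewrite k0 muln0 div0n; lia.
have Hreg : X + X + Fc <= Phi s.
  have F1 : (cq - cp) * h m + 8 * (cq - cp) <= (cq - cp) * h s.
    case: mk => [->|[k2 /andP [m1 mk]]]; first by rewrite !muln0.
    have := h_core (s := s) (m := m) m1 (ltac:(lia)).
    have dm : d * m <= (d - 1) * s.
      apply: leq_trans (_ : (d - 1) * (cq - cp) <= _); first by rewrite mulnC.
      by rewrite leq_mul2l; apply/orP; right; lia.
    move=> /(_ dm) hc.
    have : (cq - cp) * (h m + 8) <= (cq - cp) * h s by rewrite leq_mul2l hc orbT.
    by rewrite mulnDr (mulnC _ 8).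
  have F2 : 4 * (lam * h (s %/ d)) + 8 * lam <= lam * h s.
    case: E3 => [->|ds]; first by rewrite !muln0.
    have hl := h_light ds.
    have : lam * (4 * h (s %/ d) + 8) <= lam * h s.
      rewrite leq_mul2l; apply/orP; right; lia.
    by rewrite mulnDr mulnA (mulnC lam 4) -mulnA (mulnC _ 8).
  have F3 : 10 * k <= k * h s.
    by rewrite mulnC leq_mul2l h_10 ?orbT //; lia.
  have F4 : 4 * G <= 4 * (lam * h (s %/ d)) + 4 * k by lia.
  have Es : s * h s = (cq - cp) * h s + lam * h s + 2 * (k * h s).
    rewrite {1}(_ : s = (cq - cp) + lam + 2 * k); last lia.
    rewrite !mulnDl; lia.
  rewrite /Phi Es hX hFc; lia.
have spans : forall i, cp <= i < cq -> i < f i -> f i + 1 - i <= m.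
  move=> i hi0 ifi; have := cok i hi0 ifi.
  move=> hc; rewrite hm leq_divRL; last lia.
  by rewrite mulnC.
have [psi epsi] := core_emb IH mS (k := cq - cp) (a := cp) (b := cq) (lo' := lo + X) (hi' := lo + X + Fc)
  erefl c2 (ltac:(lia)) ccl spans (ltac:(lia)) (ltac:(lia)).
have [c [cD hc]] := count_choice (lo:=lo) (hi:=hi) (s:=s) (X:=X) (Fc:=Fc) (Y:=Y) (D:=2*s) (top:=top) (G:=G)
  htop (ltac:(lia)) erefl s0 (ltac:(lia)) hdeg hY.
have [phi ephi] := chain_embed IH htop (ltac:(lia) : Y + c <= X) (ltac:(lia) : top <= NN) ch epsi
  (ltac:(lia) : f p < p + s) (y0 := 0) (ltac:(lia)).
exists phi; rewrite qe; apply: emb_widen ephi _ _; lia.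
Qed.

End Comb.

Section RealPart.
Local Open Scope R_scope.
Local Unset Implicit Arguments.
Definition cl (r : R) : nat := Z.to_nat (up r).

Lemma cl_spec r : 0 <= r -> r < INR (cl r) <= r + 1.
Proof.
move=> r0; have [h1 h2] := archimed r.
have hz : (0 < up r)%Z by apply: lt_IZR; lra.
rewrite /cl INR_IZR_INZ Z2Nat.id; last by lia.
lra.
Qed.

Lemma cl_mono r r' : 0 <= r -> r <= r' -> (cl r <= cl r')%N.
Proof.
move=> r0 rr; have := cl_spec _ r0; have := cl_spec _ (Rle_trans _ _ _ r0 rr).
move=> [a b] [c d]; apply/leP; apply: INR_le.
destruct (Rle_lt_dec (INR (cl r)) (INR (cl r'))) as [H|H]; first exact: H.
exfalso.
have : (cl r' < cl r)%coq_nat by apply: INR_lt.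
move=> /(le_INR _ _); rewrite S_INR; lra.
Qed.

Lemma ln0 : ln 0 = 0.
Proof. unfold ln. destruct Rlt_dec as [h|h]. exfalso; lra. reflexivity. Qed.

Lemma Rpower0 e : Rpower 0 e = 1.
Proof.
by rewrite /Rpower ln0 Rmult_0_r exp_0.
Qed.

Lemma Rpower1b e : Rpower 1 e = 1.
Proof. by rewrite /Rpower ln_1 Rmult_0_r exp_0. Qed.

Lemma Rpower_ge1 x e : 1 <= x -> 0 <= e -> 1 <= Rpower x e.
Proof.
move=> hx he; rewrite -(Rpower1b e); apply: Rle_Rpower_l => //; lra.
Qed.

Lemma Rpower_inv y e : 0 < y -> Rpower (/ y) e = / Rpower y e.
Proof.
move=> hy; rewrite /Rpower ln_Rinv // -Ropp_mult_distr_r exp_Ropp //.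
Qed.

Lemma INR_ge1 n : (1 <= n)%N -> 1 <= INR n.
Proof. by move=> h; apply: (le_INR 1); apply/leP. Qed.

Lemma Rpow_nat_mono e x y : 0 <= e -> (x <= y)%N -> Rpower (INR x) e <= Rpower (INR y) e.
Proof.
move=> he hxy; case: x hxy => [|x] hxy.
  rewrite /= Rpower0; case: y hxy => [|y] _; first by rewrite /= Rpower0; lra.
  by apply: Rpower_ge1 => //; apply: INR_ge1.
apply: Rle_Rpower_l => //; split; first by apply: lt_0_INR; lia.
by apply: le_INR; apply/leP.
Qed.

Lemma real_part (eps : R) : 0 < eps -> exists (d : nat) (h : nat -> nat) (c : R),
  (2 <= d)%N /\ (forall x y, (x <= y)%N -> (h x <= h y)%N) /\
  (forall s m, (1 <= m)%N -> (m <= s)%N -> (d * m <= (d-1) * s)%N -> (h m + 8 <= h s)%N) /\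
  (forall s, (d <= s)%N -> (4 * h (s %/ d) + 12 <= h s)%N) /\
  (forall s, (1 <= s)%N -> (10 <= h s)%N) /\
  (forall n, INR (n * h n) <= c * Rpower (INR n) (1 + eps)).
Proof.
move=> he.
pose d := (cl (Rpower 8 (/ eps)) + 2)%N.
have d2 : (2 <= d)%N by rewrite /d; lia.
have dR : 2 <= INR d by apply: (le_INR 2); apply/leP.
have d8 : 8 <= Rpower (INR d) eps.
  have h8 : 0 <= Rpower 8 (/ eps) by rewrite /Rpower; apply: Rlt_le; apply: exp_pos.
  have := cl_spec _ h8 => -[h1 _].
  have : Rpower 8 (/ eps) <= INR d.
    rewrite /d plus_INR /=; lra.
  move=> hle.
  have -> : 8 = Rpower (Rpower 8 (/ eps)) eps.
    rewrite Rpower_mult Rinv_l; last lra.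
    rewrite Rpower_1 //; lra.
  apply: Rle_Rpower_l; first lra.
  split => //; rewrite /Rpower; apply: exp_pos.
pose q := 1 - / INR d.
have q0 : 0 < q.
  have : / INR d <= / 2 by apply: Rinv_le_contravar; lra.
  rewrite /q; lra.
have q1 : q < 1.
  have : 0 < / INR d by apply: Rinv_0_lt_compat; lra.
  rewrite /q; lra.
pose eta := 1 - Rpower q eps.
have eta0 : 0 < eta.
  rewrite /eta; have : Rpower q eps < Rpower 1 eps by apply: Rlt_Rpower_l; lra.
  rewrite Rpower1b; lra.
pose A := 9 / eta + 33.
have A33 : 33 <= A.
  have : 0 < 9 / eta by apply: Rdiv_lt_0_compat; lra.
  rewrite /A; lra.
have Aeta : 9 <= A * eta.
  rewrite /A Rmult_plus_distr_r /Rdiv Rmult_assoc Rinv_l; last lra.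
  have : 0 <= 33 * eta by lra.
  lra.
pose h := fun x => cl (A * Rpower (INR x) eps).
have hpos x : 0 <= A * Rpower (INR x) eps.
  apply: Rmult_le_pos; first lra.
  rewrite /Rpower; apply: Rlt_le; apply: exp_pos.
have hspec x := cl_spec _ (hpos x).
exists d, h, (A + 1); split => //; split.
  move=> x y hxy; apply: cl_mono => //.
  apply: Rmult_le_compat_l; first lra.
  by apply: Rpow_nat_mono => //; lra.
split.
  move=> s m m1 ms dm.
  have s1 : (1 <= s)%N by apply: leq_trans ms.
  have sR := INR_ge1 _ s1; have mR := INR_ge1 _ m1.
  have hm : INR m <= q * INR s.
    have : INR d * INR m <= (INR d - 1) * INR s.
      rewrite -mult_INR.
      have -> : INR d - 1 = INR (d - 1).
        rewrite minus_INR; last by apply/leP; lia.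
        by [].
      rewrite -mult_INR; apply: le_INR; by apply/leP.
    move=> H; rewrite /q.
    apply: (Rmult_le_reg_l (INR d)); first lra.
    rewrite -Rmult_assoc Rmult_minus_distr_l Rmult_1_r Rinv_r; last lra.
    lra.
  have pw : Rpower (INR m) eps <= Rpower q eps * Rpower (INR s) eps.
    rewrite Rpower_mult_distr; try lra.
    apply: Rle_Rpower_l; lra.
  have s1e := Rpower_ge1 _ _ sR (Rlt_le _ _ he).
  have := hspec m; have := hspec s; move=> [a1 a2] [b1 b2].
  apply/leP; apply: INR_le; rewrite plus_INR.
  have : A * Rpower (INR m) eps <= A * (Rpower q eps * Rpower (INR s) eps).
    by apply: Rmult_le_compat_l; lra.
  have : A * eta * Rpower (INR s) eps >= 9 * 1.
    apply: Rmult_ge_compat; lra.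
  have E : A * (Rpower q eps * Rpower (INR s) eps) = A * Rpower (INR s) eps - A * eta * Rpower (INR s) eps.
    rewrite /eta; ring.
  rewrite E => X1 X2.
  replace (INR 8) with 8 by (simpl; lra).
  rewrite /h; lra.
split.
  move=> s ds.
  have s1 : (1 <= s)%N by apply: leq_trans ds; lia.
  have sd1 : (1 <= s %/ d)%N by rewrite divn_gt0 //; lia.
  have sR := INR_ge1 _ s1.
  have hsd : INR (s %/ d) <= INR s / INR d.
    apply: (Rmult_le_reg_r (INR d)); first lra.
    rewrite /Rdiv Rmult_assoc Rinv_l; last lra.
    rewrite Rmult_1_r -mult_INR; apply: le_INR; apply/leP.
    by rewrite leq_divM.
  have pw : Rpower (INR (s %/ d)) eps <= Rpower (INR s) eps / 8.
    have sd0 : 0 < INR (s %/ d) by apply: lt_0_INR; apply/ltP.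
    apply: Rle_trans (_ : Rpower (INR s / INR d) eps <= _).
      apply: Rle_Rpower_l; lra.
    rewrite /Rdiv -Rpower_mult_distr; try (apply: Rinv_0_lt_compat); try lra.
    rewrite Rpower_inv; last lra.
    apply: Rmult_le_compat_l; first by rewrite /Rpower; apply: Rlt_le; apply: exp_pos.
    apply: Rinv_le_contravar; lra.
  have P1 := Rpower_ge1 _ _ sR (Rlt_le _ _ he).
  have := hspec (s %/ d); have := hspec s; move=> [a1 a2] [b1 b2].
  apply/leP; apply: INR_le; rewrite plus_INR mult_INR.
  replace (INR 12) with 12 by (simpl; lra).
  replace (INR 4) with 4 by (simpl; lra).
  have : A * Rpower (INR (s %/ d)) eps <= A * (Rpower (INR s) eps / 8).
    by apply: Rmult_le_compat_l; lra.
  have : A * Rpower (INR s) eps >= 33 * 1 by apply: Rmult_ge_compat; lra.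
  rewrite /h; lra.
split.
  move=> s s1; have sR := INR_ge1 _ s1.
  have P1 := Rpower_ge1 _ _ sR (Rlt_le _ _ he).
  have := hspec s; move=> [a1 a2].
  apply/leP; apply: INR_le.
  replace (INR 10) with 10 by (simpl; lra).
  have : A * Rpower (INR s) eps >= 33 * 1 by apply: Rmult_ge_compat; lra.
  rewrite /h; lra.
move=> n; case: n => [|n].
  rewrite /= Rpower0; lra.
have nR : 1 <= INR n.+1 by apply: INR_ge1.
have P1 := Rpower_ge1 _ _ nR (Rlt_le _ _ he).
rewrite Rpower_plus Rpower_1; last lra.
rewrite mult_INR.
have := hspec n.+1; move=> [a1 a2].
have : INR n.+1 * INR (h n.+1) <= INR n.+1 * (A * Rpower (INR n.+1) eps + 1).
  rewrite /h; apply: Rmult_le_compat_l; lra.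
have : INR n.+1 * 1 <= INR n.+1 * Rpower (INR n.+1) eps.
  apply: Rmult_le_compat_l; lra.
move=> X1 X2.
have E : (A + 1) * (INR n.+1 * Rpower (INR n.+1) eps) = A * (INR n.+1 * Rpower (INR n.+1) eps) + INR n.+1 * Rpower (INR n.+1) eps by ring.
have E2 : INR n.+1 * (A * Rpower (INR n.+1) eps + 1) = A * (INR n.+1 * Rpower (INR n.+1) eps) + INR n.+1 * 1 by ring.
rewrite E; rewrite E2 in X2; lra.
Qed.

End RealPart.

Section Final.

Variable n : nat.
Variable m : rel 'I_n.
Hypothesis hm : is_parenthesis_matching m.

Definition mate (i : nat) : nat :=
  if (insub i : option 'I_n) is Some i' then
    (if [pick j | m i' j] is Some j then nat_of_ord j else i) else i.

Lemma mateP (i : 'I_n) : exists j : 'I_n, mate i = j /\ m i j.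
Proof.
case: hm => _ _ hu _.
rewrite /mate valK; case: pickP => [j mij|none]; first by exists j.
have [j [mij _]] := hu i; by move: (none j); rewrite mij.
Qed.

Lemma mate_uniq (i j : 'I_n) : m i j -> mate i = j.
Proof.
case: (hm) => _ _ hu _ mij; have [k [-> mik]] := mateP i.
have [x [_ ux]] := hu i; have := ux _ mij; have := ux _ mik; by move=> <- <-.
Qed.

Lemma mate_lt i : i < n -> mate i < n.
Proof. move=> hi; have [j [-> _]] := mateP (Ordinal hi); exact: ltn_ord. Qed.

Lemma mate_inv i : i < n -> mate (mate i) = i.
Proof.
move=> hi; have [j [e mij]] := mateP (Ordinal hi).
rewrite e; case: hm => hs _ _ _.
have mji : m j (Ordinal hi) by rewrite hs.
by rewrite (mate_uniq mji).
Qed.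

Lemma mate_neq i : i < n -> mate i != i.
Proof.
move=> hi; have [j [e mij]] := mateP (Ordinal hi); rewrite e.
apply/eqP => ji; case: hm => _ hirr _ _.
have : j = Ordinal hi by apply: val_inj.
by move=> jE; move: mij; rewrite jE hirr.
Qed.

Lemma mate_nc i j : i < n -> i < mate i -> i < j -> j < mate i -> (i < mate j) && (mate j < mate i).
Proof.
move=> hi ifi ij jfi.
have hj : j < n by apply: ltn_trans jfi (mate_lt hi).
have [a [ea ma]] := mateP (Ordinal hi).
have [b [eb mb]] := mateP (Ordinal hj).
case: (hm) => hs _ _ hnc.
rewrite ea eb in ifi jfi *.
have ab : a != b.
  apply/eqP => abE; have := mate_inv hj; rewrite eb -abE -ea mate_inv //= => E.
  by move: ij; rewrite E ltnn.
case: (ltngtP j b) => jb.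
- have := hnc (Ordinal hi) a (Ordinal hj) b ifi jb ma mb => /=.
  case=> [[H|H]|[[H1 H2]|[H1 H2]]].
  + by move: jfi; rewrite ltnNge (ltnW H).
  + by move: (ltn_trans ij jb); rewrite ltnNge (ltnW H).
  + by move: ij; rewrite ltnNge H1.
  + rewrite (ltn_trans ij jb) /= ltn_neqAle H2 andbT.
    apply/negP => /eqP E; move: ab; rewrite eq_sym; apply/negP; rewrite negbK; apply/eqP; exact: val_inj.
- have mba : m b (Ordinal hj) by rewrite hs.
  have := hnc (Ordinal hi) a b (Ordinal hj) ifi jb ma mba => /=.
  case=> [[H|H]|[[H1 H2]|[H1 H2]]].
  + by move: (ltn_trans jb jfi); rewrite ltnNge (ltnW H).
  + by move: ij; rewrite ltnNge (ltnW H).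
  + by move: jfi; rewrite ltnNge H2.
  + rewrite (leq_ltn_trans (n:=b) _ (ltn_trans jb jfi)) // andbT ltn_neqAle H1 andbT.
    apply/negP => /eqP E.
    have := mate_inv hj; rewrite eb -E ea => E2.
    by move: jfi; rewrite E2 ltnn.
- have bj : b = Ordinal hj by apply: val_inj.
  by move: mb; rewrite bj; case: hm => _ -> _ _.
Qed.

End Final.

Open Scope R_scope.

Theorem theorem2p8 :
  forall eps : R, (0 < eps)%R ->
  exists c : R,
    forall (n : nat) (m : rel 'I_n), is_parenthesis_matching m ->
      exists N : nat,
        (INR N <= c * Rpower (INR n) (1 + eps))%R /\ arrows_K3 m N.
Proof.
move=> eps he; have [d [h [c [d2 [hmono [hcore [hlight [h10 hfin]]]]]]]] := real_part _ he.
exists c => n m hm.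
exists (n * h n)%N; split; first exact: hfin.
move=> colo.
case: (classic (blue_triangle colo)) => [bt|nbt]; first by right.
left.
set N := (n * h n)%N.
pose colN (x y : nat) : bool :=
  if (insub x : option 'I_N) is Some x' then
    (if (insub y : option 'I_N) is Some y' then colo x' y' else true) else true.
have colNE (x y : 'I_N) : colN x y = colo x y by rewrite /colN !valK.
have notri : forall x y z, (x < y -> y < z -> z < N -> [|| colN x y, colN x z | colN y z])%N.
  move=> x y z xy yz zN.
  have xN : (x < N)%N by lia.
  have yN : (y < N)%N by lia.
  rewrite -[x]/(nat_of_ord (Ordinal xN)) -[y]/(nat_of_ord (Ordinal yN)) -[z]/(nat_of_ord (Ordinal zN)) !colNE.
  apply/negPn/negP => H; apply: nbt.
  exists (Ordinal xN), (Ordinal yN), (Ordinal zN).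
  move: H; rewrite !negb_or => /and3P [a b e]; by split.
have G := @main_good n (mate m) (@mate_lt n m hm) (@mate_inv n m hm) (@mate_neq n m hm) (@mate_nc n m hm)
  N colN notri d h d2 hmono hcore hlight h10 n 0%N n 0%N N (leqnn n) (add0n n).
have [phi [e1 e2 e3]] : exists phi, emb (mate m) colN 0%N n 0%N N phi.
  apply: G => //; first by move=> i /andP [_ hi]; rewrite (mate_lt hm hi).
have hr : forall u : 'I_n, (phi u < N)%N by move=> u; have := e2 u; rewrite ltn_ord => /(_ isT) /andP [_ ->].
exists (fun u => Ordinal (hr u)); split.
  by move=> u v uv /=; apply: e1.
move=> u v uv muv /=.
have mu : mate m u = v by apply: mate_uniq.
have := e3 u; rewrite ltn_ord /= mu => /(_ isT uv).
by rewrite -[phi u]/(nat_of_ord (Ordinal (hr u))) -[phi v]/(nat_of_ord (Ordinal (hr v))) colNE.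
Qed.
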